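(* For all integers $m,n\geq 1$, \[p^{od}_{ed}(2m-1,2n)=p^{od}_{ed}(2m-1,2n-1).\]
   Context: $\mathcal{P}^{od}_{ed}$ is the set of integer partitions whose parts are all distinct and such that every even part is smaller than every odd part. Partitions consisting only of odd parts, or only of even parts, are allowed. $p^{od}_{ed}(m,n)$ is the number of partitions of $n$ in $\mathcal{P}^{od}_{ed}$ with exactly $m$ parts. *)

(* Defs.v *)
From mathcomp Require Import all_boot.
Set Implicit Arguments. Unset Strict Implicit. Unset Printing Implicit Defensive.

(* A partition into distinct parts is identified with its set of parts.
   Every part of a partition of n lies in {1,...,n}, so a partition of n into
   distinct parts is a set A of elements of 'I_(n.+1) with 0 \notin A and
   \sum_(i in A) i = n; its number of parts is #|A|. *)

Definition pod_ed_set (k : nat) (A : {set 'I_k}) : bool :=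
  [forall i in A, 0 < (i : nat)] &&
  [forall e in A, forall o in A, (~~ odd e && odd o) ==> (e < o)].

Definition p_od_ed (m n : nat) : nat :=
  #|[set A : {set 'I_n.+1} |
      [&& pod_ed_set A, \sum_(i in A) (i : nat) == n & #|A| == m]]|.

(* Main.v *)
Require Import Defs.
From mathcomp Require Import all_boot zify.

Lemma podP K (A : {set 'I_K}) :
  reflect ((forall i, i \in A -> 0 < (i:nat)) /\
           (forall e o, e \in A -> o \in A -> ~~ odd e -> odd o -> (e:nat) < o))
          (pod_ed_set A).
Proof.
apply: (iffP andP) => [[/forallP H1 /forallP H2]|[H1 H2]]; split.
- by move=> i iA; have := H1 i; rewrite iA.
- move=> e o eA oA ee oo; have := H2 e; rewrite eA => /forallP /(_ o).
  by rewrite oA ee oo.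
- by apply/forallP => i; apply/implyP; apply: H1.
- apply/forallP => e; apply/implyP => eA; apply/forallP => o; apply/implyP => oA.
  by apply/implyP => /andP [ee oo]; apply: H2.
Qed.

Lemma sum_parity K (A : {set 'I_K}) :
  odd (\sum_(i in A) (i:nat)) = odd #|[set i in A | odd i]|.
Proof.
have -> : \sum_(i in A) (i:nat) = \sum_(i in A) (odd i + (i./2) * 2).
  by apply: eq_bigr => i _; rewrite muln2 odd_double_half.
rewrite big_split /= -big_distrl /= oddD oddM /= andbF addbF.
have -> : \sum_(i in A) (odd i : nat) = \sum_(i in A | odd i) 1.
  by rewrite big_mkcondr /=; apply: eq_bigr => i _; case: (odd i).
by rewrite sum1_card; congr (odd _); apply: eq_card => i; rewrite !inE.
Qed.

Section Main.
Context {N : nat}.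
Notation T := 'I_N.+1.
Implicit Types A B : {set T}.

Definition emax A : nat := \max_(i in A | ~~ odd i) (i:nat).
Definition omin A : nat := N.+1 - \max_(i in A | odd i) (N.+1 - i).

Lemma emax_ub A (x : T) : x \in A -> ~~ odd x -> x <= emax A.
Proof. by move=> xA ox; have := @leq_bigmax_cond _ (fun i : T => (i \in A) && ~~ odd i) (fun i : T => (i:nat)) x; rewrite xA ox; apply. Qed.

Lemma emax_in A (x : T) : x \in A -> ~~ odd x ->
  exists2 e : T, e \in A & ~~ odd e /\ (e : nat) = emax A.
Proof.
move=> xA ox.
have h : 0 < #|[pred i : T | (i \in A) && ~~ odd i]|.
  by apply/card_gt0P; exists x; rewrite inE xA ox.
have [e eP eE] := eq_bigmax_cond (fun i : T => (i:nat)) h.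
move: eP; rewrite inE => /andP [eA oe]; exists e => //; split => //.
Qed.

Lemma omin_lb A (x : T) : x \in A -> odd x -> omin A <= x.
Proof.
move=> xA ox; have := @leq_bigmax_cond _ (fun i : T => (i \in A) && odd i) (fun i : T => N.+1 - i) x.
rewrite xA ox => /(_ isT); rewrite /omin; move: (\max_(i in A | odd i) (N.+1 - i)) => M h; have := ltn_ord x; lia.
Qed.

Lemma omin_in A (x : T) : x \in A -> odd x ->
  exists2 o : T, o \in A & odd o /\ (o : nat) = omin A.
Proof.
move=> xA ox.
have h : 0 < #|[pred i : T | (i \in A) && odd i]|.
  by apply/card_gt0P; exists x; rewrite inE xA ox.
have [o oP oE] := eq_bigmax_cond (fun i : T => N.+1 - i) h.
move: oP; rewrite inE => /andP [oA oo]; exists o => //; split => //.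
rewrite /omin; rewrite (_ : \max_(i in A | odd i) (N.+1 - i) = N.+1 - o).
  by have := ltn_ord o; lia.
by rewrite -oE.
Qed.

Lemma eq_inord (i : T) k : k < N.+1 -> (i == inord k) = (val i == k).
Proof. by move=> h; rewrite -val_eqE /= inordK. Qed.

Lemma le_sum A (x : T) : x \in A -> x <= \sum_(i in A) (i:nat).
Proof. by move=> xA; rewrite (big_setD1 x xA) /= leq_addr. Qed.

End Main.
Arguments emax_ub {N A x}.
Arguments emax_in {N A x}.
Arguments omin_lb {N A x}.
Arguments omin_in {N A x}.
Arguments le_sum {N A x}.

Lemma evenE x : ~~ odd x -> x = x./2 * 2.
Proof. by move=> h; rewrite -{1}(odd_double_half x) (negbTE h) muln2. Qed.
Lemma oddE x : odd x -> x = x./2 * 2 + 1.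
Proof. by move=> h; rewrite -{1}(odd_double_half x) h muln2 addnC. Qed.
Lemma odd_pred x : 0 < x -> odd x.-1 = ~~ odd x.
Proof. by case: x => // x _ /=; rewrite negbK. Qed.

Arguments evenE {x}. Arguments oddE {x}.
Section Maps.
Context {N : nat}.
Notation T := 'I_N.+1.
Implicit Types A B : {set T}.

Definition fmap A : {set T} := inord (emax A).-1 |: (A :\ inord (emax A)).
Definition gmap A : {set T} := inord (omin A).+1 |: (A :\ inord (omin A)).

Lemma fmap_props A (x : T) : pod_ed_set A -> x \in A -> ~~ odd x ->
  [/\ pod_ed_set (fmap A), #|fmap A| = #|A|,
      (\sum_(i in fmap A) (i:nat)).+1 = \sum_(i in A) (i:nat) &
      gmap (fmap A) = A].
Proof.
move=> /podP [Hpos Hord] xA ox.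
have [e eA [oe eE]] := emax_in xA ox.
set E := emax A in eE *.
have Epos : 0 < E by rewrite -eE; apply: Hpos.
have EN : E < N.+1 by rewrite -eE ltn_ord.
have ie : inord E = e by apply: val_inj; rewrite /= inordK.
set e' : T := inord E.-1.
have ve' : (e' : nat) = E.-1 by rewrite /e' inordK //; lia.
have oe' : odd e' by rewrite ve' odd_pred // -eE.
have e'A : e' \notin A.
  apply/negP => h; have := Hord e e' eA h oe oe'; rewrite ve' eE; lia.
have e'e : e' != e by apply/negP => /eqP h; move: oe'; rewrite h (negbTE oe).
have e'nin : e' \notin A :\ e by rewrite !inE negb_and e'A orbT.
have fE : fmap A = e' |: (A :\ e) by rewrite /fmap -/E ie.
have memf y : (y \in fmap A) = (y == e') || ((y != e) && (y \in A)).
  by rewrite fE !inE.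
split.
- apply/podP; split.
  + move=> i; rewrite memf => /orP [/eqP ->|/andP [_ iA]]; last exact: Hpos.
    by rewrite ve'; have := evenE oe; rewrite eE; lia.
  + move=> a b; rewrite !memf => /orP [/eqP ->|/andP [ae aA]].
      by rewrite oe'.
    move=> /orP [/eqP ->|/andP [be bA]] oa ob.
      have := emax_ub aA oa; rewrite -/E ve' => h.
      have ha : (a:nat) != E by rewrite -eE; apply: contra ae => /eqP h2; apply/eqP/val_inj.
      have := evenE oa; have := evenE oe; rewrite eE; lia.
    exact: Hord.
- by rewrite fE cardsU1 e'nin (cardsD1 e A) eA.
- by rewrite fE big_setU1 //= (big_setD1 e eA) /= ve' eE -addSn prednK.
- have Om : omin (fmap A) = E.-1.
    have h1 : omin (fmap A) <= E.-1 by rewrite -ve'; apply: omin_lb => //; rewrite memf eqxx.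
    have e'f : e' \in fmap A by rewrite memf eqxx.
    have [o + [oo oE]] := omin_in e'f oe'.
    rewrite memf => /orP [/eqP ho|/andP [_ oA]].
      by rewrite -oE ho ve'.
    have := Hord e o eA oA oe oo; rewrite oE eE; lia.
  rewrite /gmap Om prednK // ie -/e' fE; apply/setP => y; rewrite !inE.
  case: (eqVneq y e) => [->|ye]; rewrite ?eqxx ?eA ?(negbTE e'e) //=.
  by case: (eqVneq y e') => [->|ye'] //=; rewrite (negbTE e'A).
Qed.

Lemma gmap_props B (x : T) : pod_ed_set B -> x \in B -> odd x ->
  \sum_(i in B) (i:nat) < N ->
  [/\ pod_ed_set (gmap B), #|gmap B| = #|B|,
      \sum_(i in gmap B) (i:nat) = (\sum_(i in B) (i:nat)).+1 &
      fmap (gmap B) = B].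
Proof.
move=> /podP [Hpos Hord] xB ox hs.
have [o oB [oo oE]] := omin_in xB ox.
set O := omin B in oE *.
have ON : O.+1 < N.+1 by have := le_sum oB; rewrite oE; lia.
have io : inord O = o by apply: val_inj; rewrite /= inordK //; lia.
set o' : T := inord O.+1.
have vo' : (o' : nat) = O.+1 by rewrite /o' inordK.
have oo' : ~~ odd o' by rewrite vo' /= -oE oo.
have o'B : o' \notin B.
  apply/negP => h; have := Hord o' o h oB oo' oo; rewrite vo' oE; lia.
have o'o : o' != o by apply/negP => /eqP h; move: oo'; rewrite h oo.
have o'nin : o' \notin B :\ o by rewrite !inE negb_and o'B orbT.
have gE : gmap B = o' |: (B :\ o) by rewrite /gmap -/O io.
have memg y : (y \in gmap B) = (y == o') || ((y != o) && (y \in B)).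
  by rewrite gE !inE.
split.
- apply/podP; split.
  + move=> i; rewrite memg => /orP [/eqP ->|/andP [_ iB]]; last exact: Hpos.
    by rewrite vo'.
  + move=> a b; rewrite !memg => ha /orP [/eqP ->|/andP [bo bB]].
      by rewrite (negbTE oo').
    move=> oa ob; move: ha => /orP [/eqP ->|/andP [ao aB]]; last exact: Hord.
    have := omin_lb bB ob; rewrite -/O vo' => h.
    have hb : (b:nat) != O by rewrite -oE; apply: contra bo => /eqP h2; apply/eqP/val_inj.
    have := oddE ob; have := oddE oo; rewrite oE; lia.
- by rewrite gE cardsU1 o'nin (cardsD1 o B) oB.
- by rewrite gE big_setU1 //= (big_setD1 o oB) /= vo' oE.
- have Em : emax (gmap B) = O.+1.
    have o'g : o' \in gmap B by rewrite memg eqxx.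
    have h1 : O.+1 <= emax (gmap B) by rewrite -vo'; apply: emax_ub.
    have [e + [oe eE]] := emax_in o'g oo'.
    rewrite memg => /orP [/eqP he|/andP [_ eB]].
      by rewrite -eE he vo'.
    have := Hord e o eB oB oe oo; rewrite eE oE; lia.
  rewrite /fmap Em /= -/o' io gE; apply/setP => y; rewrite !inE.
  case: (eqVneq y o) => [->|yo]; rewrite ?eqxx ?oB ?(negbTE o'o) //=.
  by case: (eqVneq y o') => [->|yo'] //=; rewrite (negbTE o'B).
Qed.
End Maps.
Arguments fmap_props {N A x}.
Arguments gmap_props {N B x}.

Definition good K k s (A : {set 'I_K}) :=
  [&& pod_ed_set A, \sum_(i in A) (i:nat) == s & #|A| == k].

Arguments good {K}.
Section Count.
Context {N : nat}.
Notation T := 'I_N.+1.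

Lemma exists_even (A : {set T}) : odd #|A| -> ~~ odd (\sum_(i in A) (i:nat)) ->
  exists2 x, x \in A & ~~ odd x.
Proof.
move=> hk hs; case: (pickP [pred x in A | ~~ odd x]) => [x /andP [xA ox]|h].
  by exists x.
have E : [set i in A | odd i] = A.
  apply/setP => i; rewrite !inE; have := h i; rewrite /= => /negbT.
  by rewrite negb_and negbK; case: (i \in A).
by move: hs; rewrite sum_parity E hk.
Qed.

Lemma exists_odd (A : {set T}) : odd (\sum_(i in A) (i:nat)) ->
  exists2 x, x \in A & odd x.
Proof.
move=> hs; case: (pickP [pred x in A | odd x]) => [x /andP [xA ox]|h].
  by exists x.
have E : [set i in A | odd i] = set0.
  by apply/setP => i; rewrite !inE; have := h i; rewrite /=.
by move: hs; rewrite sum_parity E cards0.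
Qed.

Lemma count_eq k s : odd k -> odd s -> s < N ->
  #|[set A : {set T} | good k s.+1 A]| = #|[set A : {set T} | good k s A]|.
Proof.
move=> ok os sN.
set S1 := [set A : {set T} | good k s.+1 A].
set S0 := [set A : {set T} | good k s A].
have Hf A : A \in S1 -> fmap A \in S0 /\ gmap (fmap A) = A.
  rewrite inE => /and3P [pA /eqP sA /eqP cA].
  have [x xA ox] : exists2 x, x \in A & ~~ odd x by apply: exists_even; rewrite ?cA ?sA //= os.
  have [p1 c1 s1 g1] := fmap_props pA xA ox.
  split=> //; rewrite inE /good p1 c1 cA eqxx /=.
  by rewrite andbT; apply/eqP; move: s1; rewrite sA => -[].
have Hg B : B \in S0 -> gmap B \in S1 /\ fmap (gmap B) = B.
  rewrite inE => /and3P [pB /eqP sB /eqP cB].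
  have [x xB ox] : exists2 x, x \in B & odd x by apply: exists_odd; rewrite sB.
  have [p1 c1 s1 f1] := gmap_props pB xB ox (eq_ind_r (fun t => t < N) sN sB).
  by split=> //; rewrite inE /good p1 c1 cB s1 sB !eqxx.
have inj : {in S1 &, injective fmap}.
  move=> A1 A2 h1 h2 e; have [_ <-] := Hf _ h1; have [_ <-] := Hf _ h2.
  by rewrite e.
rewrite -(card_in_imset inj); apply: eq_card => B.
apply/imsetP/idP => [[A hA ->]|hB]; first by have [] := Hf _ hA.
have [h1 h2] := Hg _ hB; by exists (gmap B).
Qed.
End Count.

Section Embed.
Context {N : nat}.
Definition w : 'I_N.+1 -> 'I_N.+2 := widen_ord (leqnSn N.+1).
Lemma w_inj : injective w.
Proof. by move=> a b /(congr1 val) /= h; apply: val_inj. Qed.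

Lemma good_w k s (A : {set 'I_N.+1}) : good k s (w @: A) = good k s A.
Proof.
rewrite /good (card_imset _ w_inj) big_imset /=; last by move=> ? ? _ _; apply: w_inj.
congr andb; apply/podP/podP => [[H1 H2]|[H1 H2]]; split.
- by move=> i iA; apply: (H1 (w i)); apply: imset_f.
- by move=> e o eA oA; apply: (H2 (w e) (w o)); apply: imset_f.
- by move=> i /imsetP [j jA ->]; apply: H1.
- by move=> e o /imsetP [e1 eA ->] /imsetP [o1 oA ->]; apply: H2.
Qed.

Lemma embed k s : s <= N ->
  #|[set A : {set 'I_N.+1} | good k s A]| = #|[set B : {set 'I_N.+2} | good k s B]|.
Proof.
move=> sN; rewrite -(card_imset _ (@imset_inj _ _ w w_inj)).
apply: eq_card => B; rewrite inE.
apply/imsetP/idP => [[A]|hB]; first by rewrite inE => hA ->; rewrite good_w.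
exists [set i | w i \in B]; last first.
  apply/setP => x; apply/idP/imsetP => [xB|[i]]; last by rewrite inE => h ->.
  have xN : (x : nat) < N.+1.
    move: hB => /and3P [_ /eqP sB _]; have := le_sum xB; rewrite sB; lia.
  have wx : w (Ordinal xN) = x by apply: val_inj.
  by exists (Ordinal xN); rewrite ?inE wx.
rewrite inE -good_w; suff -> : w @: [set i | w i \in B] = B by [].
apply/setP => x; apply/imsetP/idP => [[i]|xB]; first by rewrite inE => h ->.
have xN : (x : nat) < N.+1.
  move: hB => /and3P [_ /eqP sB _]; have := le_sum xB; rewrite sB; lia.
have wx : w (Ordinal xN) = x by apply: val_inj.
by exists (Ordinal xN); rewrite ?inE wx.
Qed.
End Embed.

Theorem mainTheorem3 (m n : nat) (hm : 1 <= m) (hn : 1 <= n) :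
  p_od_ed (2 * m - 1) (2 * n) = p_od_ed (2 * m - 1) (2 * n - 1).
Proof.
case: n hn => // n' _.
set M := (2 * n').+1.
have -> : 2 * n'.+1 - 1 = M by rewrite /M; lia.
have -> : 2 * n'.+1 = M.+1 by rewrite /M; lia.
have ok : odd (2 * m - 1).
  case: m hm => // m' _; have -> : 2 * m'.+1 - 1 = (2*m').+1 by lia.
  by rewrite /= mul2n odd_double.
have oM : odd M by rewrite /M /= mul2n odd_double.
rewrite /p_od_ed.
have E := @embed M (2 * m - 1) M (leqnn M).
rewrite /good in E; rewrite E.
have C := @count_eq M.+1 (2 * m - 1) M ok oM (ltnSn M).
by rewrite /good in C; rewrite C.
Qed.
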